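(* Let $U,V\in U(n-1)$ and $(\tau,t),(\sigma,s)\in\mathfrak{N}_n$. Let $T=R_UT_{(\tau,t)}$ and $S=R_VT_{(\sigma,s)}$. Then $S$ commutes with $T$ if and only if $VU=UV$ and $(V^*\tau,t)(\sigma,s)=(U^*\sigma,s)(\tau,t)$ in $\mathfrak{N}_n$.
   Context: The Heisenberg group $\mathfrak{N}_n$ is $\mathbb{C}^{n-1}\times\mathbb{R}$ with product $(\zeta_1,v_1)(\zeta_2,v_2)=(\zeta_1+\zeta_2,\,v_1+v_2+2\,\mathrm{Im}(\zeta_2^*\zeta_1))$. Work in $U(n,1)$ defined as the group of $(n+1)\times(n+1)$ complex matrices $g$ with $g^*Jg=J$, where $J=\begin{pmatrix}0&0&1\\0&I_{n-1}&0\\1&0&0\end{pmatrix}$. For $U\in U(n-1)$, $R_U=\mathrm{diag}(1,U,1)$ (Heisenberg rotation), and for $(\tau,t)\in\mathfrak{N}_n$, $T_{(\tau,t)}=\begin{pmatrix}1&-\tau^*&\frac{-|\tau|^2+ti}{2}\\0&I_{n-1}&\tau\\0&0&1\end{pmatrix}$ (Heisenberg translation). *)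

(* Defs.v *)
From HB Require Import structures.
From mathcomp Require Import all_boot all_order all_algebra.
Set Implicit Arguments. Unset Strict Implicit. Unset Printing Implicit Defensive.
Import Order.TTheory GRing.Theory Num.Theory.
Local Open Scope ring_scope.

(* Complex scalars: an arbitrary numClosedFieldType C (e.g. algC, or R[i]),
   with conjugation z^*, imaginary unit 'i and imaginary part 'Im z.
   The dimension n-1 of the Heisenberg group's C^{n-1} factor is called m,
   so matrices of U(n,1) have size 1 + m + 1 = n + 1. *)

Section Heis.
Variable C : numClosedFieldType.
Variable m : nat.

Definition adj (p q : nat) (A : 'M[C]_(p, q)) : 'M[C]_(q, p) :=
  map_mx Num.conj (A^T).

Definition unitary (U : 'M[C]_m) : Prop := adj U *m U = 1%:M.

(* Heisenberg group N_n = C^{m} x R; the real coordinate is an element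
   v of C with v \is Num.real. *)
Definition heis_mem (x : 'cV[C]_m * C) : Prop := x.2 \is Num.real.

Definition hdot (z2 z1 : 'cV[C]_m) : C := (adj z2 *m z1) 0 0.

Definition heis_mul (x y : 'cV[C]_m * C) : 'cV[C]_m * C :=
  (x.1 + y.1, x.2 + y.2 + 2 * 'Im (hdot y.1 x.1)).

Definition blk3 (a : 'M[C]_(1,1)) (b : 'M[C]_(1,m)) (c : 'M[C]_(1,1))
                (d : 'M[C]_(m,1)) (e : 'M[C]_(m,m)) (f : 'M[C]_(m,1))
                (g : 'M[C]_(1,1)) (h : 'M[C]_(1,m)) (i : 'M[C]_(1,1))
  : 'M[C]_(1 + m + 1) :=
  block_mx (block_mx a b d e) (col_mx c f) (row_mx g h) i.

Definition hrot (U : 'M[C]_m) : 'M[C]_(1 + m + 1) :=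
  blk3 1%:M 0 0 0 U 0 0 0 1%:M.

Definition htrans (x : 'cV[C]_m * C) : 'M[C]_(1 + m + 1) :=
  let tau := x.1 in let t := x.2 in
  blk3 1%:M (- adj tau) ((- hdot tau tau + t * 'i) / 2)%:M
       0 1%:M tau
       0 0 1%:M.

End Heis.

(* Main.v *)
Require Import Defs.
From HB Require Import structures.
From mathcomp Require Import all_boot all_order all_algebra.
From mathcomp Require Import ring.
Set Implicit Arguments. Unset Strict Implicit. Unset Printing Implicit Defensive.
Import Order.TTheory GRing.Theory Num.Theory.
Local Open Scope ring_scope.

Section S.
Variable C : numClosedFieldType.
Variable m : nat.
Implicit Types (a c g i : 'M[C]_(1,1)) (b h : 'M[C]_(1,m)) (d f : 'M[C]_(m,1)) (e : 'M[C]_m).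

Lemma blk3_mul a b c d e f g h i a' b' c' d' e' f' g' h' i' :
  blk3 a b c d e f g h i *m blk3 a' b' c' d' e' f' g' h' i' =
  blk3 (a *m a' + b *m d' + c *m g') (a *m b' + b *m e' + c *m h') (a *m c' + b *m f' + c *m i')
       (d *m a' + e *m d' + f *m g') (d *m b' + e *m e' + f *m h') (d *m c' + e *m f' + f *m i')
       (g *m a' + h *m d' + i *m g') (g *m b' + h *m e' + i *m h') (g *m c' + h *m f' + i *m i').
Proof.
rewrite /blk3 mulmx_block mulmx_block mul_col_row mul_block_col mul_col_mx
  mul_row_block mul_mx_row mul_row_col add_block_mx add_col_mx add_row_mx.
by [].
Qed.

Lemma blk3_inj a b c d e f g h i a' b' c' d' e' f' g' h' i' :
  blk3 a b c d e f g h i = blk3 a' b' c' d' e' f' g' h' i' ->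
  a = a' /\ b = b' /\ c = c' /\ d = d' /\ e = e' /\ f = f' /\ g = g' /\ h = h' /\ i = i'.
Proof.
rewrite /blk3 => /eq_block_mx [/eq_block_mx [-> -> -> ->] /eq_col_mx [-> ->] /eq_row_mx [-> ->] ->].
by [].
Qed.
End S.
Section T.
Variable C : numClosedFieldType.
Variable m : nat.
Lemma adjM p q r (A : 'M[C]_(p,q)) (B : 'M[C]_(q,r)) : adj (A *m B) = adj B *m adj A.
Proof. by rewrite /adj trmx_mul map_mxM. Qed.
Lemma adjD p q (A B : 'M[C]_(p,q)) : adj (A + B) = adj A + adj B.
Proof. by rewrite /adj linearD /= map_mxD. Qed.
Lemma adjN p q (A : 'M[C]_(p,q)) : adj (- A) = - adj A.
Proof. by rewrite /adj linearN /= map_mxN. Qed.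
Lemma adjK p q (A : 'M[C]_(p,q)) : adj (adj A) = A.
Proof. by apply/matrixP => i j; rewrite /adj !mxE conjCK. Qed.
Lemma mxDE p q (A B : 'M[C]_(p,q)) i j : (A + B) i j = A i j + B i j.
Proof. by rewrite mxE. Qed.
Lemma mxNE p q (A : 'M[C]_(p,q)) i j : (- A) i j = - A i j.
Proof. by rewrite mxE. Qed.
Lemma mxsE (a : C) i j : (a%:M : 'M[C]_1) i j = a *+ (i == j).
Proof. by rewrite mxE. Qed.
Lemma hdotC (x y : 'cV[C]_m) : hdot x y = (hdot y x)^*.
Proof. by rewrite /hdot -[adj x *m y]adjK adjM adjK [in LHS]/adj !mxE. Qed.
Lemma hdot_adj (A : 'M[C]_m) (x y : 'cV[C]_m) : hdot y (A *m x) = hdot (adj A *m y) x.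
Proof. by rewrite /hdot adjM adjK mulmxA. Qed.
Lemma hdotDl (x y z : 'cV[C]_m) : hdot (x + y) z = hdot x z + hdot y z.
Proof. by rewrite /hdot adjD mulmxDl mxDE. Qed.
Lemma hdotDr (x y z : 'cV[C]_m) : hdot z (x + y) = hdot z x + hdot z y.
Proof. by rewrite /hdot mulmxDr mxDE. Qed.
Lemma hdot_unit (A : 'M[C]_m) (x y : 'cV[C]_m) : unitary A ->
  hdot (adj A *m x) (adj A *m y) = hdot x y.
Proof. by move=> uA; rewrite hdot_adj adjK mulmxA (mulmx1C uA) mul1mx. Qed.
End T.


Theorem lemma3p2 (C : numClosedFieldType) (m : nat)
    (U V : 'M[C]_m) (tau sigma : 'cV[C]_m) (t s : C) :
  unitary U -> unitary V ->
  t \is Num.real -> s \is Num.real ->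
  let T := hrot U *m htrans (tau, t) in
  let S := hrot V *m htrans (sigma, s) in
  (S *m T = T *m S) <->
  (V *m U = U *m V /\
   heis_mul (adj V *m tau, t) (sigma, s) = heis_mul (adj U *m sigma, s) (tau, t)).
Proof.
move=> uU uV rt rs T S.
have eR : forall (W : 'M[C]_m) (x : 'cV[C]_m) y, hrot W *m htrans (x, y) =
  blk3 1%:M (- adj x) ((- hdot x x + y * 'i) / 2)%:M 0 W (W *m x) 0 0 1%:M.
  move=> W x y; rewrite /hrot /htrans /= blk3_mul.
  by rewrite !(mul1mx, mulmx1, mul0mx, mulmx0, addr0, add0r).
rewrite /T /S !eR !blk3_mul !(mul1mx, mulmx1, mul0mx, mulmx0, addr0, add0r).
set a := (_ / 2)%:M; set b := (_ / 2)%:M.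
rewrite /heis_mul /=.
set p := hdot sigma (U *m tau); set q := hdot tau (V *m sigma).
have eq1 : hdot sigma (adj V *m tau) = q^*.
  by rewrite hdotC -hdot_adj.
have ep1 : hdot tau (adj U *m sigma) = p^*.
  by rewrite hdotC -hdot_adj.
rewrite eq1 ep1.
split.
  move=> /blk3_inj [_ [E12 [E13 [_ [E22 _]]]]].
  split=> //.
  have H2 : adj V *m tau + sigma = adj U *m sigma + tau.
    move: (congr1 (@adj _ _ _) E12); rewrite !(adjD, adjN, adjM, adjK).
    by rewrite !mulmxN -!opprD => /oppr_inj E; rewrite addrC -E addrC.
  have Epq : p = q.
    move: (congr1 (fun M : 'M[C]_1 => M 0 0) E13) => /=.
    rewrite !mxDE !mulNmx !mxNE -/p -/q => E.
    apply/eqP; rewrite -subr_eq0.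
    have -> : p - q = (b 0 0 + - q + a 0 0) - (a 0 0 + - p + b 0 0).
      by ring.
    by rewrite E subrr.
  by rewrite H2 Epq (addrC s).
move=> [E22 /pair_equal_spec [H2 Him]].
have two0 : (2 : C) != 0 by rewrite pnatr_eq0.
have e2 : hdot (adj V *m tau) sigma = q by rewrite hdotC eq1 conjCK.
have e3 : hdot (adj U *m sigma) tau = p by rewrite hdotC ep1 conjCK.
have Hre : p + p^* = q + q^*.
  have N1 : hdot (adj V *m tau + sigma) (adj V *m tau + sigma) =
     hdot tau tau + q + q^* + hdot sigma sigma.
    by rewrite !hdotDl !hdotDr hdot_unit // e2 eq1; ring.
  have N2 : hdot (adj U *m sigma + tau) (adj U *m sigma + tau) =
     hdot sigma sigma + p + p^* + hdot tau tau.
    by rewrite !hdotDl !hdotDr hdot_unit // e3 ep1; ring.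
  rewrite H2 N2 in N1.
  apply/eqP; rewrite -subr_eq0; apply/eqP.
  have -> : p + p^* - (q + q^*) = (hdot sigma sigma + p + p^* + hdot tau tau) - (hdot tau tau + q + q^* + hdot sigma sigma) by ring.
  by rewrite N1 subrr.
have Him' : p - p^* = q - q^*.
  move: Him; rewrite (addrC s) => /addrI /(mulfI two0).
  rewrite !Im_conj => /oppr_inj; rewrite !ImE => /(mulIf (invr_neq0 two0)).
  move/(mulfI (neq0Ci C)) => E.
  by apply: oppr_inj; rewrite !opprB E.
have Epq : p = q.
  apply: (mulfI two0).
  have -> : 2 * p = (p + p^*) + (p - p^*) by ring.
  rewrite Hre Him'; ring.
have H2' : tau + adj U *m sigma = sigma + adj V *m tau by rewrite addrC -H2 addrC.
have E12 : - adj tau + - adj sigma *m U = - adj sigma + - adj tau *m V.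
  move: (congr1 (@adj _ _ _) H2'); rewrite !(adjD, adjM, adjK) => E.
  by rewrite !mulNmx -!opprD E.
have E13 : a + - adj sigma *m (U *m tau) + b = b + - adj tau *m (V *m sigma) + a.
  rewrite !mulNmx [adj sigma *m _]mx11_scalar [adj tau *m _]mx11_scalar (_ : (adj sigma *m (U *m tau)) 0 0 = p) // (_ : (adj tau *m (V *m sigma)) 0 0 = q) // Epq.
  by rewrite addrAC [in RHS]addrAC (addrC a).
have E23 : V *m (U *m tau) + V *m sigma = U *m (V *m sigma) + U *m tau.
  have k1 : U *m V *m adj U = V by rewrite -E22 -mulmxA (mulmx1C uU) mulmx1.
  have k2 : U *m V *m adj V = U by rewrite -mulmxA (mulmx1C uV) mulmx1.
  move: (congr1 (mulmx (U *m V)) H2'); rewrite !mulmxDr !mulmxA k1 k2 => E.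
  by rewrite E22 E.
by rewrite E12 E13 E23 E22.
Qed.
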